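(* Let $R$ be a commutative ring different from the zero ring, $\Gamma$ an EI-category with endofunctor $\phi$, $C$ and $D$ finite free $R\Gamma$-chain complexes, and $v\colon C\to D$ and $f\colon D\to C\circ\phi$ $R\Gamma$-chain maps. Then $u(f\circ v)+s(\chi(D))=u((v\circ\phi)\circ f)+s(\chi(C))$ in $U(R,\Gamma,\phi)$.
   Context: EI-category: small category in which every endomorphism is an isomorphism. $R\Gamma$-modules are contravariant functors $\Gamma\to R$-modules; finitely generated free ones are isomorphic to finite sums of $R\Gamma(?,x)=R[\mathrm{Mor}_\Gamma(?,x)]$. $U(R,\Gamma,\phi)$ is $K_0$ of the exact category whose objects are natural transformations $g\colon M\to M\circ\phi$ with $M$ finitely generated free and morphisms $\tau\colon M\to M'$ with $g'\tau=(\tau\circ\phi)g$; for a chain map $g\colon C\to C\circ\phi$, $u(g)=\sum_n(-1)^n[g_n]$. $U(\Gamma)=\bigoplus_{\mathrm{Is}\,\Gamma}\mathbb{Z}$ (isomorphism classes of objects); the rank of $\bigoplus_i R\Gamma(?,x_i)$ is the element counting the $x_i$ in each isomorphism class, and $\chi(C)=\sum_n(-1)^n\mathrm{rk}(C_n)\in U(\Gamma)$. The homomorphism $s\colon U(\Gamma)\to U(R,\Gamma,\phi)$ sends the basis element of $\bar x$ to the class of the zero map $R\Gamma(?,x)\to R\Gamma(?,x)\circ\phi$. *)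

(* Defs.v *)
From HB Require Import structures.
From mathcomp Require Import all_boot all_algebra.
From mathcomp Require Import finmap.
From mathcomp Require Import boolp.
From mathcomp Require Import monalg.
Unset Strict Implicit. Unset Printing Implicit Defensive.
Import GRing.Theory.
Local Open Scope ring_scope.
Local Open Scope fset_scope.

Set Implicit Arguments.
Section Remap.
Variables (R : comNzRingType) (K K' : choiceType) (F : K -> K').
Definition remap (a : {malg R[K]}) : {malg R[K']} :=
  \sum_(k <- msupp a) << a@_k *g F k >>.
Lemma remapEw (d : {fset K}) a : msupp a `<=` d ->
  remap a = \sum_(k <- d) << a@_k *g F k >>.
Proof.
move=> le; rewrite /remap; apply: big_fset_incl => // k _ kn.
by rewrite mcoeff_outdom // monalgU0.
Qed.
Lemma remap_linear : linear remap.
Proof.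
move=> c a b.
set d := msupp a `|` msupp b `|` msupp (c *: a + b).
have sa : msupp a `<=` d by apply/fsubsetP=> k ka; rewrite !inE ka.
have sb : msupp b `<=` d by apply/fsubsetP=> k kb; rewrite !inE kb orbT.
have sab : msupp (c *: a + b) `<=` d by apply/fsubsetP=> k kb; rewrite !inE kb !orbT.
rewrite (remapEw sab) (remapEw sa) (remapEw sb).
rewrite scaler_sumr -big_split /=; apply: eq_bigr => k _.
rewrite mcoeffD mcoeffZ monalgUD; congr (_ + _)%R.
by apply/malgP => k'; rewrite mcoeffZ !mcoeffU mulrnAr.
Qed.
HB.instance Definition _ :=
  GRing.isLinear.Build R {malg R[K]} {malg R[K']} _ remap remap_linear.
Lemma remapU x k : remap << x *g k >> = << x *g F k >>.
Proof. by rewrite (remapEw msuppU_le) big_seq_fset1 mcoeffUU. Qed.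
End Remap.

Lemma remap_id (R : comNzRingType) (K : choiceType) (a : {malg R[K]}) :
  remap id a = a.
Proof. by rewrite /remap -monalgE. Qed.

Lemma remap_comp (R : comNzRingType) (K1 K2 K3 : choiceType)
  (F : K1 -> K2) (H : K2 -> K3) (a : {malg R[K1]}) :
  remap (H \o F) a = remap H (remap F a).
Proof.
have -> : remap F a = \sum_(k <- msupp a) << a@_k *g F k >> by [].
rewrite raddf_sum /=; apply: eq_bigr => k _; by rewrite remapU.
Qed.

Unset Implicit Arguments.
Local Close Scope fset_scope.

Record EICategory := {
  Ob : Type;
  Hom : Ob -> Ob -> Type;
  idm : forall x, Hom x x;
  comp : forall x y z, Hom y z -> Hom x y -> Hom x z;
  comp1m : forall x y (f : Hom x y), comp x y y (idm y) f = f;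
  compm1 : forall x y (f : Hom x y), comp x x y f (idm x) = f;
  compA : forall w x y z (f : Hom y z) (g : Hom x y) (k : Hom w x),
      comp w x z (comp x y z f g) k = comp w y z f (comp w x y g k);
  endo_iso : forall x (f : Hom x x),
      exists g : Hom x x, comp x x x g f = idm x /\ comp x x x f g = idm x
}.
Arguments Hom {G} : rename.
Arguments idm {G} x : rename.
Arguments comp {G x y z} : rename.

Record endofunctor (G : EICategory) := {
  fobj : Ob G -> Ob G;
  fmap : forall x y : Ob G, Hom x y -> Hom (fobj x) (fobj y);
  fmap_id : forall x, fmap x x (idm x) = idm (fobj x);
  fmap_comp : forall x y z (f : Hom y z) (g : Hom x y),
      fmap x z (comp f g) = comp (fmap y z f) (fmap x y g)
}.
Arguments fobj {G} p x : rename.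
Arguments fmap {G} p {x y} f : rename.

Record RGmod (R : comNzRingType) (G : EICategory) := {
  mobj : Ob G -> lmodType R;
  mmap : forall x y : Ob G, Hom x y -> mobj y -> mobj x;
  mmap_linear : forall x y (f : Hom x y), linear (mmap x y f);
  mmap_id : forall x (m : mobj x), mmap x x (idm x) m = m;
  mmap_comp : forall x y z (f : Hom y z) (g : Hom x y) (m : mobj z),
      mmap x z (comp f g) m = mmap x y g (mmap y z f m)
}.
Arguments mobj {R G} M x : rename.
Arguments mmap {R G} M {x y} f m : rename.

Section Modules.
Variables (R : comNzRingType) (G : EICategory).

Definition precomp (M : RGmod R G) (phi : endofunctor G) : RGmod R G.
Proof.
refine {| mobj := fun c => mobj M (fobj phi c);
          mmap := fun x y f => mmap M (fmap phi f) |}.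
- by move=> x y f; apply: mmap_linear.
- by move=> x m /=; rewrite fmap_id mmap_id.
- by move=> x y z f g m /=; rewrite fmap_comp mmap_comp.
Defined.

Definition ntfam (M N : RGmod R G) := forall x : Ob G, mobj M x -> mobj N x.

Definition is_nat {M N : RGmod R G} (t : ntfam M N) :=
  (forall x, linear (t x)) /\
  (forall x y (f : Hom x y) (m : mobj M y), t x (mmap M f m) = mmap N f (t y m)).

Definition homT (c x : Ob G) : Type := Hom c x.
HB.instance Definition _ c x := gen_eqMixin (homT c x).
HB.instance Definition _ c x := gen_choiceMixin (homT c x).

Definition RGrep (x : Ob G) : RGmod R G.
Proof.
refine {| mobj := fun c => GRing.Lmodule.clone R {malg R[homT c x]} _;
          mmap := fun c d (a : Hom c d) =>
            remap (fun k : homT d x => (comp k a : homT c x)) |}.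
- by move=> c d a; apply: remap_linear.
- move=> c m /=; rewrite -[RHS]remap_id /remap; apply: eq_bigr => k _.
  by rewrite compm1.
- move=> c d e a b m /=; rewrite -remap_comp /remap; apply: eq_bigr => k _.
  by rewrite -compA.
Defined.

Definition basis_sum (M : RGmod R G) {n : nat} (xs : 'I_n -> Ob G)
    (b : forall i, mobj M (xs i)) (c : Ob G)
    (a : forall i : 'I_n, {malg R[homT c (xs i)]}) : mobj M c :=
  \sum_(i < n) \sum_(k <- msupp (a i)) (a i)@_k *: mmap M (k : Hom c (xs i)) (b i).

Definition is_basis (M : RGmod R G) {n : nat} (xs : 'I_n -> Ob G)
    (b : forall i, mobj M (xs i)) :=
  forall c : Ob G, bijective (basis_sum M xs b c).

Definition fg_free (M : RGmod R G) :=
  exists (n : nat) (xs : 'I_n -> Ob G) (b : forall i, mobj M (xs i)),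
    is_basis M xs b.

(* The exact category defining U(R, Gamma, phi):                       *)
(*  exact sequences: objectwise short exact sequences.                 *)
Variable phi : endofunctor G.

Definition is_Uobj {M : RGmod R G} (g : ntfam M (precomp M phi)) :=
  fg_free M /\ is_nat g.

Definition is_Umor {M M' : RGmod R G} (g : ntfam M (precomp M phi))
    (g' : ntfam M' (precomp M' phi)) (t : ntfam M M') :=
  is_nat t /\ (forall x (m : mobj M x), g' x (t x m) = t (fobj phi x) (g x m)).

(* an additive invariant of this exact category with values in A; the
   class map into K_0 = U(R, Gamma, phi) is the universal one, so an
   identity holds in U(R, Gamma, phi) iff it holds after applying every
   additive invariant. *)
Definition additive_invariant (A : zmodType)
    (h : forall M : RGmod R G, ntfam M (precomp M phi) -> A) :=
  (forall (M M' : RGmod R G) g g' (t : ntfam M M'),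
      is_Uobj g -> is_Uobj g' -> is_Umor g g' t ->
      (forall x, bijective (t x)) -> h M g = h M' g') /\
  (forall (M1 M M2 : RGmod R G) g1 g g2 (i : ntfam M1 M) (p : ntfam M M2),
      is_Uobj g1 -> is_Uobj g -> is_Uobj g2 ->
      is_Umor g1 g i -> is_Umor g g2 p ->
      (forall x, injective (i x)) ->
      (forall x (m2 : mobj M2 x), exists m, p x m = m2) ->
      (forall x (m : mobj M x), p x m = 0 <-> exists m1, i x m1 = m) ->
      h M g = h M1 g1 + h M2 g2).

Record chaincx := {
  cmod : int -> RGmod R G;
  cdiff : forall n : int, ntfam (cmod n) (cmod (n - 1))
}.

Definition is_chaincx (C : chaincx) :=
  (forall n, is_nat (cdiff C n)) /\
  (forall n x (m : mobj (cmod C n) x), cdiff C (n - 1) x (cdiff C n x m) = 0).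

Definition cx_precomp (C : chaincx) : chaincx :=
  {| cmod := fun n => precomp (cmod C n) phi;
     cdiff := fun n x => cdiff C n (fobj phi x) |}.

Definition chainfam (C D : chaincx) := forall n : int, ntfam (cmod C n) (cmod D n).

Definition is_chainmap {C D : chaincx} (v : chainfam C D) :=
  (forall n, is_nat (v n)) /\
  (forall n x (m : mobj (cmod C n) x),
      v (n - 1) x (cdiff C n x m) = cdiff D n x (v n x m)).

Definition cx_finite_free (C : chaincx) (N : nat) (nb : int -> nat)
    (xs : forall n, 'I_(nb n) -> Ob G)
    (b : forall n (i : 'I_(nb n)), mobj (cmod C n) (xs n i)) :=
  (forall n, is_basis (cmod C n) (xs n) (b n)) /\
  (forall n : int, (N < `|n|)%N -> forall x (m : mobj (cmod C n) x), m = 0).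

(* Evaluations under an additive invariant h of the elements of U(R,Gamma,phi)
   u(g) = sum_n (-1)^n [g_n]  and  s(chi(C)) = sum_n (-1)^n s(rk C_n),
   where rk C_n = sum_i  class(xs n i)  and  s(class x) = [0 : R Gamma(?,x) ->
   R Gamma(?,x) o phi].  Sums range over -N <= n <= N. *)
Section Eval.
Variables (A : zmodType) (h : forall M : RGmod R G, ntfam M (precomp M phi) -> A).

Definition u_eval {C : chaincx} (g : chainfam C (cx_precomp C)) (N : nat) : A :=
  \sum_(j < (N + N).+1)
     h (cmod C (j%:Z - N%:Z)) (g (j%:Z - N%:Z)) *~ ((-1) ^ (j%:Z - N%:Z)).

Definition zero_endo (x : Ob G) : ntfam (RGrep x) (precomp (RGrep x) phi) :=
  fun c _ => 0.

Definition s_chi_eval (N : nat) (nb : int -> nat) (xs : forall n, 'I_(nb n) -> Ob G) : A :=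
  \sum_(j < (N + N).+1)
     (\sum_(i < nb (j%:Z - N%:Z)) h (RGrep (xs (j%:Z - N%:Z) i)) (zero_endo _))
       *~ ((-1) ^ (j%:Z - N%:Z)).
End Eval.

End Modules.

Arguments is_Uobj {R G} phi {M} g.
Arguments is_Umor {R G} phi {M M'} g g' t.
Arguments additive_invariant {R G} phi {A} h.
Arguments cx_precomp {R G} phi C.
Arguments cx_finite_free {R G} C N {nb} xs b.
Arguments u_eval {R G} phi {A} h {C} g N.
Arguments s_chi_eval {R G} phi {A} h N {nb} xs.
Arguments precomp {R G} M phi.
Arguments ntfam {R G} M N.
Arguments RGrep {R G} x.
Arguments cmod {R G} c n.
Arguments cdiff {R G} c n.
Arguments is_chaincx {R G} C.
Arguments chainfam {R G} C D.
Arguments fg_free {R G} M.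
Arguments is_chainmap {R G C D} v.
Arguments is_nat {R G M N} t.
Arguments basis_sum {R G} M {n} xs b c a.
Arguments is_basis {R G} M {n} xs b.

(* Main.v *)
Require Import Defs.
From HB Require Import structures.
From mathcomp Require Import all_boot all_algebra.
From mathcomp Require Import finmap boolp monalg.
Import GRing.Theory.
Local Open Scope ring_scope.
Local Notation Hm := Defs.Hom.
Local Notation cmp := Defs.comp.

Section Lin.
Variables (R : comNzRingType) (U V : lmodType R) (f : U -> V) (Hf : linear f).
Lemma lin0 : f 0 = 0.
Proof.
have := Hf 1 0 0; rewrite !scale1r addr0 => E.
have : f 0 + f 0 = f 0 + 0 by rewrite addr0 -E.
exact: addrI.
Qed.
Lemma linD u v : f (u + v) = f u + f v.
Proof. by have := Hf 1 u v; rewrite !scale1r. Qed.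
Lemma linZ a u : f (a *: u) = a *: f u.
Proof. by have := Hf a u 0; rewrite !addr0 lin0 addr0. Qed.
Lemma linN u : f (- u) = - f u.
Proof. by rewrite -scaleN1r linZ scaleN1r. Qed.
Lemma lin_sum (I : Type) (r : seq I) (P : pred I) (F : I -> U) :
  f (\sum_(i <- r | P i) F i) = \sum_(i <- r | P i) f (F i).
Proof.
elim/big_rec2: _ => [|i y1 y2 _ <-]; first exact: lin0.
by rewrite linD.
Qed.
End Lin.
Arguments lin0 {R U V f} Hf.
Arguments linD {R U V f} Hf u v.
Arguments linZ {R U V f} Hf a u.
Arguments linN {R U V f} Hf u.
Arguments lin_sum {R U V f} Hf {I} r P F.

Section DL.
Variables (R : comNzRingType) (I : finType) (T : I -> lmodType R).
Definition dl := {dffun forall i, T i}.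
HB.instance Definition _ := Choice.copy dl {dffun forall i, T i}.
Definition dl0 : dl := finfun (fun i => (0 : T i)).
Definition dlopp (f : dl) : dl := finfun (fun i => - f i).
Definition dladd (f g : dl) : dl := finfun (fun i => f i + g i).
Definition dlscale (a : R) (f : dl) : dl := finfun (fun i => a *: f i).
Lemma dladdA : associative dladd. Proof. by move=> f g k; apply/ffunP=> i; rewrite !ffunE addrA. Qed.
Lemma dladdC : commutative dladd. Proof. by move=> f g; apply/ffunP=> i; rewrite !ffunE addrC. Qed.
Lemma dladd0 : left_id dl0 dladd. Proof. by move=> f; apply/ffunP=> i; rewrite !ffunE add0r. Qed.
Lemma dladdN : left_inverse dl0 dlopp dladd. Proof. by move=> f; apply/ffunP=> i; rewrite !ffunE addNr. Qed.
HB.instance Definition _ := GRing.isZmodule.Build dl dladdA dladdC dladd0 dladdN.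
Lemma dlscaleA a b (f : dl) : dlscale a (dlscale b f) = dlscale (a * b) f.
Proof. by apply/ffunP=> i; rewrite !ffunE scalerA. Qed.
Lemma dlscale1 : left_id 1 dlscale. Proof. by move=> f; apply/ffunP=> i; rewrite !ffunE scale1r. Qed.
Lemma dlscaleDr : right_distributive dlscale +%R. Proof. by move=> a f g; apply/ffunP=> i; rewrite !ffunE scalerDr. Qed.
Lemma dlscaleDl (f : dl) : {morph dlscale^~ f : a b / a + b}. Proof. by move=> a b; apply/ffunP=> i; rewrite !ffunE scalerDl. Qed.
HB.instance Definition _ := GRing.Zmodule_isLmodule.Build R dl dlscaleA dlscale1 dlscaleDr dlscaleDl.
Lemma dlE0 i : (0 : dl) i = 0. Proof. by rewrite ffunE. Qed.
Lemma dlED (f g : dl) i : (f + g) i = f i + g i. Proof. by rewrite ffunE. Qed.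
Lemma dlEZ a (f : dl) i : (a *: f) i = a *: f i. Proof. by rewrite ffunE. Qed.
Lemma dlEsum (J : Type) (r : seq J) (P : pred J) (F : J -> dl) i :
  (\sum_(j <- r | P j) F j) i = \sum_(j <- r | P j) F j i.
Proof. by elim/big_rec2: _ => [|j y1 y2 _ <-]; rewrite ?dlE0 ?dlED. Qed.
Lemma dl_lin i : linear (fun f : dl => f i).
Proof. by move=> a f g; rewrite dlED dlEZ. Qed.
End DL.

Section Lext.
Variables (R : comNzRingType) (K : choiceType) (V : lmodType R).
Definition lext (F : K -> V) (a : {malg R[K]}) : V :=
  \sum_(k <- msupp a) a@_k *: F k.
Lemma lextEw F (d : {fset K}) a : (msupp a `<=` d)%fset ->
  lext F a = \sum_(k <- d) a@_k *: F k.
Proof.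
move=> le; rewrite /lext; apply: big_fset_incl => // k _ kn.
by rewrite mcoeff_outdom // scale0r.
Qed.
Lemma lext_linear F : linear (lext F).
Proof.
move=> c a b.
set d := (msupp a `|` msupp b `|` msupp (c *: a + b))%fset.
have sa : (msupp a `<=` d)%fset by apply/fsubsetP=> k ka; rewrite !inE ka.
have sb : (msupp b `<=` d)%fset by apply/fsubsetP=> k kb; rewrite !inE kb orbT.
have sab : (msupp (c *: a + b) `<=` d)%fset by apply/fsubsetP=> k kb; rewrite !inE kb !orbT.
rewrite (lextEw _ _ _ sab) (lextEw _ _ _ sa) (lextEw _ _ _ sb).
rewrite scaler_sumr -big_split /=; apply: eq_bigr => k _.
by rewrite mcoeffD mcoeffZ scalerDl scalerA.
Qed.
Lemma lextU F x k : lext F << x *g k >> = x *: F k.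
Proof. by rewrite (lextEw _ _ _ msuppU_le) big_seq_fset1 mcoeffUU. Qed.
Lemma eq_lext F1 F2 a : F1 =1 F2 -> lext F1 a = lext F2 a.
Proof. by move=> E; apply: eq_bigr => k _; rewrite E. Qed.
Lemma lext0 a : lext (fun _ => 0) a = 0.
Proof. by rewrite /lext big1 // => k _; rewrite scaler0. Qed.
End Lext.
Arguments lext {R K V} F a.
Arguments lextU {R K V} F x k.
Arguments eq_lext {R K V} F1 F2 a.
Arguments lext0 {R K V} a.
Arguments lext_linear {R K V} F.
Lemma lext_lin (R : comNzRingType) (K : choiceType) (V W : lmodType R) (g : V -> W) (F : K -> V) a : linear g ->
  g (lext F a) = lext (g \o F) a.
Proof. by move=> Hg; rewrite /lext lin_sum //; apply: eq_bigr => k _; rewrite linZ. Qed.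
Arguments lext_lin {R K V W} g F a.

Lemma lext_mono (R : comNzRingType) (K : choiceType) (a : {malg R[K]}) :
  lext (fun k => << 1 *g k >>) a = a.
Proof.
rewrite [RHS]monalgE; apply: eq_bigr => k _.
by apply/malgP=> k'; rewrite mcoeffZ !mcoeffU mulrnAr mulr1.
Qed.

Lemma lext_remap (R : comNzRingType) (K K' : choiceType) (V : lmodType R)
  (H : K -> K') (F : K' -> V) a :
  lext F (remap H a) = lext (F \o H) a.
Proof.
rewrite /remap (lin_sum (lext_linear F)) /lext.
by apply: eq_bigr => k _ /=; rewrite -/(lext F _) lextU.
Qed.

Section Mods.
Variables (R : comNzRingType) (G : EICategory).

Lemma mmap0 (M : RGmod R G) x y (k : Hm x y) : Defs.mmap M k 0 = 0.
Proof. exact: (lin0 (Defs.mmap_linear _ _ M x y k)). Qed.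

Definition Std (I : finType) (xs : I -> Ob G) : RGmod R G.
Proof.
refine {| mobj := fun c => dl R I (fun i => mobj (@RGrep R G (xs i)) c);
          Defs.mmap := fun c d (a : Hm c d) (f : dl R I (fun i => mobj (@RGrep R G (xs i)) d)) =>
             (finfun (fun i => Defs.mmap (RGrep (xs i)) a (f i)) : dl R I _) |}.
- move=> c d a r f g; apply/ffunP=> i; rewrite !ffunE.
  by rewrite (Defs.mmap_linear _ _ (RGrep (xs i)) c d a).
- by move=> c f; apply/ffunP=> i; rewrite !ffunE Defs.mmap_id.
- by move=> c d e a b f; apply/ffunP=> i; rewrite !ffunE Defs.mmap_comp.
Defined.

Definition Prod (M1 M2 : RGmod R G) : RGmod R G.
Proof.
refine {| mobj := fun c => (mobj M1 c * mobj M2 c)%type : lmodType R;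
          Defs.mmap := fun c d (a : Hm c d) (p : (mobj M1 d * mobj M2 d)%type) =>
             (Defs.mmap M1 a p.1, Defs.mmap M2 a p.2) |}.
- move=> c d a r p q /=.
  by rewrite (Defs.mmap_linear _ _ M1 c d a) (Defs.mmap_linear _ _ M2 c d a).
- by move=> c [p1 p2] /=; rewrite !Defs.mmap_id.
- by move=> c d e a b p /=; rewrite !Defs.mmap_comp.
Defined.

Definition is_iso {M N : RGmod R G} (t : ntfam M N) :=
  is_nat t /\ forall x, bijective (t x).

Lemma basis_sumE (M : RGmod R G) n (xs : 'I_n -> Ob G) b c a :
  basis_sum M xs b c a = \sum_i lext (fun k : homT G c (xs i) => Defs.mmap M k (b i)) (a i).
Proof. by []. Qed.

Lemma basis_sum_nat (M : RGmod R G) n (xs : 'I_n -> Ob G) b c d (k : Hm c d) a :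
  Defs.mmap M k (basis_sum M xs b d a) =
  basis_sum M xs b c (fun i => remap (fun k0 : homT G d (xs i) => (cmp k0 k : homT G c (xs i))) (a i)).
Proof.
rewrite !basis_sumE (lin_sum (Defs.mmap_linear _ _ M c d k)); apply: eq_bigr => i _.
rewrite lext_remap (lext_lin _ _ _ (Defs.mmap_linear _ _ M c d k)).
by apply: eq_lext => k0 /=; rewrite Defs.mmap_comp.
Qed.

Lemma basis_sum_lin (M : RGmod R G) n (xs : 'I_n -> Ob G) b c r a a' :
  basis_sum M xs b c (fun i => r *: a i + a' i) =
  r *: basis_sum M xs b c a + basis_sum M xs b c a'.
Proof.
rewrite !basis_sumE scaler_sumr -big_split; apply: eq_bigr => i _ /=.
by rewrite lext_linear.
Qed.


Lemma fg_free_iso (M N : RGmod R G) (t : ntfam N M) : is_iso t -> fg_free N -> fg_free M.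
Proof.
move=> [[Hl Hn] Hb] [n [xs [b Hbas]]].
exists n, xs, (fun i => t (xs i) (b i)) => c.
apply: (eq_bij (bij_comp (Hb c) (Hbas c))) => a /=.
rewrite !basis_sumE (lin_sum (Hl c)); apply: eq_bigr => i _.
rewrite (lext_lin _ _ _ (Hl c)); apply: eq_lext => k /=.
by rewrite Hn.
Qed.

Section StdFree.
Variables (I : finType) (xs : I -> Ob G).

Definition ebas (x : I) : mobj (Std I xs) (xs x) :=
  finfun (dfwith (fun j => 0 : mobj (@RGrep R G (xs j)) (xs x))
            (<< 1 *g (idm (xs x) : homT G (xs x) (xs x)) >> : mobj (RGrep (xs x)) (xs x))).

Lemma mmap_ebas x c (k : Hm c (xs x)) j :
  (Defs.mmap (Std I xs) k (ebas x)) j =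
  dfwith (fun j => 0 : mobj (@RGrep R G (xs j)) c)
            (<< 1 *g (k : homT G c (xs x)) >> : mobj (RGrep (xs x)) c) j.
Proof.
rewrite /= !ffunE; have [<-|ne] := eqVneq x j.
  by rewrite !dfwith_in /= remapU comp1m.
by rewrite !dfwith_out // linear0.
Qed.

Lemma Std_bs_comp n (xs' : 'I_n -> I) c a j :
  (basis_sum (Std I xs) (fun i => xs (xs' i)) (fun i => ebas (xs' i)) c a) j =
  \sum_i lext (fun k : homT G c (xs (xs' i)) =>
     dfwith (fun j0 => 0 : mobj (@RGrep R G (xs j0)) c)
            (<< 1 *g k >> : mobj (RGrep (xs (xs' i))) c) j) (a i).
Proof.
rewrite basis_sumE dlEsum; apply: eq_bigr => i _.
rewrite (lext_lin _ _ _ (dl_lin _ _ _ _)); apply: eq_lext => k /=.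
exact: mmap_ebas.
Qed.

Lemma Std_free : fg_free (Std I xs).
Proof.
exists #|I|, (fun i => xs (enum_val i)), (fun i => ebas (enum_val i)) => c.
exists (fun f : mobj (Std I xs) c => fun i => f (enum_val i)).
- move=> a; apply: functional_extensionality_dep => i.
  rewrite Std_bs_comp (bigD1 i) //= big1 ?addr0.
    by rewrite (eq_lext _ (fun k => << 1 *g k >>)) ?lext_mono // => k; rewrite dfwith_in.
  move=> i' ne; rewrite (eq_lext _ (fun _ => 0)) ?lext0 // => k; rewrite dfwith_out //.
  by apply: contra ne => /eqP/enum_val_inj ->.
- move=> f; apply/ffunP => j; rewrite Std_bs_comp.
  pose F (x : I) := lext (fun k : homT G c (xs x) =>
     dfwith (fun j0 => 0 : mobj (@RGrep R G (xs j0)) c)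
            (<< 1 *g k >> : mobj (RGrep (xs x)) c) j) (f x).
  rewrite -[LHS]/(\sum_i F (enum_val i)) -(big_enum_val (A := predT)) /=.
  rewrite (bigD1 j) //= big1 ?addr0.
    by rewrite /F (eq_lext _ (fun k => << 1 *g k >>)) ?lext_mono // => k; rewrite dfwith_in.
  move=> x ne; rewrite /F (eq_lext _ (fun _ => 0)) ?lext0 // => k; rewrite dfwith_out //.
Qed.
End StdFree.


Lemma Rep_free (x : Ob G) : fg_free (@RGrep R G x).
Proof.
apply: (@fg_free_iso _ (Std unit (fun _ => x)) (fun c f => f tt)); last exact: Std_free.
split; first split.
- by move=> c r f g; rewrite /= dlED dlEZ.
- by move=> c d k f /=; rewrite ffunE.
- move=> c; exists (fun a : mobj (RGrep x) c => (finfun (fun _ => a) : mobj (Std unit (fun _ => x)) c)).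
  + by move=> f; apply/ffunP => -[]; rewrite ffunE.
  + by move=> a; rewrite ffunE.
Qed.

Definition bas_iso (M : RGmod R G) {n} (xs : 'I_n -> Ob G) b :
  ntfam (Std ('I_n) xs) M := fun c f => basis_sum M xs b c (fun i => f i).

Lemma bas_iso_iso (M : RGmod R G) {n} (xs : 'I_n -> Ob G) b :
  is_basis M xs b -> is_iso (bas_iso M xs b).
Proof.
move=> Hb; split; first split.
- move=> c r f g; rewrite /bas_iso -basis_sum_lin; congr basis_sum.
  by apply: functional_extensionality_dep => i; rewrite dlED dlEZ.
- move=> c d k f; rewrite /bas_iso basis_sum_nat; congr basis_sum.
  by apply: functional_extensionality_dep => i; rewrite /= ffunE.
- move=> c; apply: (bij_comp (Hb c)).
  exists (fun a => (finfun a : mobj (Std ('I_n) xs) c)).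
  + by move=> f; apply/ffunP => i; rewrite ffunE.
  + by move=> a; apply: functional_extensionality_dep => i; rewrite ffunE.
Qed.

Lemma Prod_free (M1 M2 : RGmod R G) : fg_free M1 -> fg_free M2 -> fg_free (Prod M1 M2).
Proof.
move=> [n1 [xs1 [b1 Hb1]]] [n2 [xs2 [b2 Hb2]]].
pose xs12 (s : ('I_n1 + 'I_n2)%type) := match s with inl j => xs1 j | inr j => xs2 j end.
pose t : ntfam (Std _ xs12) (Prod M1 M2) := fun c f =>
  (basis_sum M1 xs1 b1 c (fun j => f (inl j)), basis_sum M2 xs2 b2 c (fun j => f (inr j))).
apply: (@fg_free_iso _ _ t); last exact: Std_free.
split; first split.
- move=> c r f g; rewrite /t /=.
  apply: (@f_equal2 _ _ _ pair); rewrite /= -basis_sum_lin; congr basis_sum.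
  + by apply: functional_extensionality_dep => i; rewrite dlED dlEZ.
  + by apply: functional_extensionality_dep => i; rewrite dlED dlEZ.
- move=> c d k f; rewrite /t /= !basis_sum_nat.
  apply: (@f_equal2 _ _ _ pair); congr basis_sum.
  + by apply: functional_extensionality_dep => i; rewrite /= ffunE.
  + by apply: functional_extensionality_dep => i; rewrite /= ffunE.
- move=> c; have [g1 c11 c12] := Hb1 c; have [g2 c21 c22] := Hb2 c.
  exists (fun m : mobj (Prod M1 M2) c => (finfun (fun s => match s as s0 return mobj (@RGrep R G (xs12 s0)) c with
      inl j => g1 m.1 j | inr j => g2 m.2 j end) : mobj (Std _ xs12) c)).
  + move=> f; apply/ffunP => -[j|j]; rewrite ffunE /t /=.
      by rewrite c11.
    by rewrite c21.
  + move=> [m1 m2]; rewrite /t /=.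
    have -> : (fun j => (finfun (fun s => match s as s0 return mobj (@RGrep R G (xs12 s0)) c with
      inl j => g1 m1 j | inr j => g2 m2 j end) : mobj (Std _ xs12) c) (inl j)) = g1 m1.
      by apply: functional_extensionality_dep => j; rewrite ffunE.
    have -> : (fun j => (finfun (fun s => match s as s0 return mobj (@RGrep R G (xs12 s0)) c with
      inl j => g1 m1 j | inr j => g2 m2 j end) : mobj (Std _ xs12) c) (inr j)) = g2 m2.
      by apply: functional_extensionality_dep => j; rewrite ffunE.
    by rewrite c12 c22.
Qed.

End Mods.
Arguments Std {R G} I xs.
Arguments Prod {R G} M1 M2.
Arguments is_iso {R G M N} t.
Arguments fg_free_iso {R G M N t}.
Arguments Rep_free {R G} x.
Arguments bas_iso {R G} M {n} xs b.
Arguments bas_iso_iso {R G M n xs b}.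
Arguments Prod_free {R G M1 M2}.
Arguments Std_free {R G I xs}.
Arguments mmap0 {R G} M {x y} k.

Section PairE.
Variables (R : comNzRingType) (U V : lmodType R).
Lemma pair_eq (X Y : Type) (p q : X * Y) : p.1 = q.1 -> p.2 = q.2 -> p = q.
Proof. by case: p q => [? ?] [? ?] /= -> ->. Qed.
Lemma pairDE (a b : U * V) : a + b = (a.1 + b.1, a.2 + b.2). Proof. by []. Qed.
Lemma pairZE r (a : U * V) : r *: a = (r *: a.1, r *: a.2). Proof. by []. Qed.
Lemma pair0E : (0 : U * V) = (0, 0). Proof. by []. Qed.
Lemma pairNE (a : U * V) : - a = (- a.1, - a.2). Proof. by []. Qed.
End PairE.

Section Inv.
Variables (R : comNzRingType) (G : EICategory) (phi : endofunctor G).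
Variables (A : zmodType) (h : forall M : RGmod R G, ntfam M (precomp M phi) -> A).
Hypothesis Hh : additive_invariant phi h.

Definition zr (M : RGmod R G) : ntfam M (precomp M phi) := fun x _ => 0.

Lemma zr_nat M : is_nat (zr M).
Proof.
split; first by move=> x r u v; rewrite /zr scaler0 addr0.
by move=> x y k m; rewrite /zr /= mmap0.
Qed.

Lemma zr_Uobj M : fg_free M -> is_Uobj phi (zr M).
Proof. by move=> H; split => //; apply: zr_nat. Qed.

Lemma h_iso (M N : RGmod R G) (t : ntfam N M) : is_iso t -> fg_free N ->
  h N (zr N) = h M (zr M).
Proof.
move=> Ht HN; have HM := fg_free_iso Ht HN.
case: Hh => Hiso _; apply: (Hiso _ _ _ _ t) => //; try exact: zr_Uobj.
split; first exact: Ht.1.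
by move=> x m; rewrite /zr (lin0 (Ht.1.1 _)).
exact: Ht.2.
Qed.

Lemma id_nat (M : RGmod R G) : is_nat (fun x (m : mobj M x) => m).
Proof. by split. Qed.

Lemma h_zero (M : RGmod R G) : fg_free M -> (forall x (m : mobj M x), m = 0) ->
  h M (zr M) = 0.
Proof.
move=> HM H0; case: Hh => _ Hadd.
have U := zr_Uobj _ HM.
have Um : is_Umor phi (zr M) (zr M) (fun x (m : mobj M x) => m) by split; [exact: id_nat|].
have E : h M (zr M) = h M (zr M) + h M (zr M).
  apply: (Hadd M M M _ _ _ (fun x m => m) (fun x m => m) U U U Um Um) => //.
  - by move=> x m1 m2.
  - by move=> x m; exists m.
  - by move=> x m; split => [_|]; [exists m | rewrite (H0 x m)].
by apply: (@addrI _ (h M (zr M))); rewrite addr0 -E.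
Qed.

Lemma rank_Std : forall n (I : finType) (xs : I -> Ob G), #|I| = n ->
  h (Std I xs) (zr _) = \sum_(i : I) h (RGrep (xs i)) (zero_endo R G phi (xs i)).
Proof.
elim=> [|n IH] I xs HI.
  rewrite big1; last by move=> i; have := card0_eq HI i.
  apply: h_zero; first exact: Std_free.
  by move=> x m; apply/ffunP => i; have := card0_eq HI i.
have [i0 _] : exists i0, i0 \in I by apply/card_gt0P; rewrite HI.
pose P := [pred i : I | i != i0].
pose xs' := fun j : {x in P} => xs (val j).
have HI' : #|{: {x in P}}| = n by rewrite card_sig cardC1 HI.
pose iota : ntfam (@RGrep R G (xs i0)) (Std I xs) := fun c a =>
  (finfun (dfwith (fun j => 0 : mobj (@RGrep R G (xs j)) c) (a : mobj (RGrep (xs i0)) c)) : mobj (Std I xs) c).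
pose pr : ntfam (@Std R G I xs) (@Std R G {x in P} xs') := fun c f =>
  (finfun (fun j : {x in P} => f (val j)) : mobj (Std {x in P} xs') c).
have iota0 : forall c, iota c 0 = 0.
  move=> c; apply/ffunP => j; rewrite !ffunE.
  by have [<-|ne] := eqVneq i0 j; rewrite ?dfwith_in ?dfwith_out.
have iota_nat : is_nat iota.
  split.
    move=> c r a b; apply/ffunP => j; rewrite !ffunE.
    have [<-|ne] := eqVneq i0 j; rewrite ?dfwith_in ?dfwith_out //.
    by rewrite scaler0 addr0.
  move=> c d k a; apply/ffunP => j; rewrite !ffunE.
  have [<-|ne] := eqVneq i0 j; rewrite ?dfwith_in ?dfwith_out //.
  by rewrite mmap0.
have pr_nat : is_nat pr.
  split.
    by move=> c r a b; apply/ffunP => j; rewrite !ffunE.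
  by move=> c d k a; apply/ffunP => j; rewrite !ffunE.
case: Hh => _ Hadd.
have E : h (Std I xs) (zr _) = h (RGrep (xs i0)) (zr _) + h (Std {x in P} xs') (zr _).
apply: (Hadd _ _ _ (zr _) (zr _) (zr _) iota pr).
- exact: zr_Uobj _ (Rep_free _).
- exact: zr_Uobj _ Std_free.
- exact: zr_Uobj _ Std_free.
- split => // x m; by rewrite /zr iota0.
- by split => // x m; rewrite /zr; apply/ffunP => j; rewrite !ffunE.
- move=> x a b /(congr1 (fun f : mobj (Std I xs) x => f i0)).
  by rewrite !ffunE !dfwith_in.
- move=> x m2.
  exists (\sum_(j : {x in P}) (finfun (dfwith (fun j0 => 0 : mobj (@RGrep R G (xs j0)) x) (m2 j : mobj (RGrep (xs (val j))) x)) : mobj (Std I xs) x)).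
  apply/ffunP => j'; rewrite ffunE dlEsum (bigD1 j') //= ffunE dfwith_in big1 ?addr0 //.
  by move=> j ne; rewrite ffunE dfwith_out // (inj_eq val_inj).
- move=> x m; split.
    move=> H; exists (m i0); apply/ffunP => j; rewrite ffunE.
    have [<-|ne] := eqVneq i0 j; rewrite ?dfwith_in ?dfwith_out //.
    have Hj : j \in P by rewrite inE eq_sym.
    have := congr1 (fun f : mobj (Std {x in P} xs') x => f (exist _ j Hj)) H.
    by rewrite !ffunE /= => ->.
  move=> [m1 <-]; apply/ffunP => j; rewrite !ffunE dfwith_out //.
  by have := valP j; rewrite inE eq_sym.
rewrite E IH // (bigD1 i0) //=; congr (_ + _).
rewrite (big_sub P (fun i => h (RGrep (xs i)) (zero_endo R G phi (xs i)))).
by [].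
Qed.

Lemma h_basis (M : RGmod R G) n (xs : 'I_n -> Ob G) b : is_basis M xs b ->
  h M (zr M) = \sum_(i < n) h (RGrep (xs i)) (zero_endo R G phi (xs i)).
Proof.
move=> Hb; rewrite -(h_iso _ _ _ (bas_iso_iso Hb)); last exact: Std_free.
by apply: rank_Std; rewrite card_ord.
Qed.

Lemma swap (M1 M2 : RGmod R G) (v : ntfam M1 M2) (f : ntfam M2 (precomp M1 phi)) :
  is_nat v -> is_nat f -> fg_free M1 -> fg_free M2 ->
  h M1 (fun x m => f x (v x m)) + h M2 (zr M2) =
  h M2 (fun x m => v (fobj phi x) (f x m)) + h M1 (zr M1).
Proof.
move=> [vl vn] [fl fn] H1 H2.
have FP := Prod_free H1 H2.
pose P := Prod M1 M2.
pose g1 : ntfam P (precomp P phi) := fun x (p : mobj P x) =>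
  ((f x (p.2 + v x p.1), 0) : mobj P (fobj phi x)).
pose g2 : ntfam P (precomp P phi) := fun x (p : mobj P x) =>
  ((f x p.2, v (fobj phi x) (f x p.2)) : mobj P (fobj phi x)).
pose tau : ntfam P P := fun x (p : mobj P x) => ((p.1, p.2 + v x p.1) : mobj P x).
pose iC : ntfam M1 P := fun x (c : mobj M1 x) => ((c, 0) : mobj P x).
pose pD : ntfam P M2 := fun x (p : mobj P x) => p.2.
have iC_nat : is_nat iC.
  split; first by move=> x r a b; rewrite /iC /=; apply: pair_eq => //=; rewrite scaler0 addr0.
  by move=> x y k m; rewrite /iC /=; rewrite mmap0.
have pD_nat : is_nat pD by split.
have g1_nat : is_nat g1.
  split.
    move=> x r a b; rewrite /g1 /=; apply: pair_eq => /=; last by rewrite scaler0 addr0.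
    by rewrite (linD (vl x)) (linZ (vl x)) addrACA -scalerDr -(linZ (fl x)) -(linD (fl x)).
  move=> x y k m; rewrite /g1 /=; apply: pair_eq => /=; last by rewrite mmap0.
  by rewrite vn -(linD (Defs.mmap_linear _ _ M2 x y k)) fn.
have g2_nat : is_nat g2.
  split.
    move=> x r a b; rewrite /g2 /=; apply: pair_eq => /=.
      exact: fl.
    by rewrite fl (vl (fobj phi x)).
  move=> x y k m; rewrite /g2 /=; apply: pair_eq => /=.
    exact: fn.
  by rewrite fn vn.
have tau_nat : is_nat tau.
  split.
    move=> x r a b; rewrite /tau /=; apply: pair_eq => /= => //.
    by rewrite (linD (vl x)) (linZ (vl x)) addrACA -scalerDr.
  move=> x y k m; rewrite /tau /=; apply: pair_eq => /= => //.
  by rewrite vn -(linD (Defs.mmap_linear _ _ M2 x y k)).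
case: Hh => Hiso Hadd.
have U1 : is_Uobj phi g1 by split.
have U2 : is_Uobj phi g2 by split.
have fvU : is_Uobj phi (fun x (m : mobj M1 x) => f x (v x m)).
  split=> //; split.
    by move=> x r a b /=; rewrite (vl x) (fl x).
  by move=> x y k m /=; rewrite vn fn.
have vfU : is_Uobj phi (fun x (m : mobj M2 x) => v (fobj phi x) (f x m)).
  split=> //; split.
    by move=> x r a b /=; rewrite (fl x) (vl _).
  by move=> x y k m /=; rewrite fn vn.
have z1 := zr_Uobj _ H1.
have z2 := zr_Uobj _ H2.
have E1 : h P g1 = h M1 (fun x m => f x (v x m)) + h M2 (zr M2).
  apply: (Hadd _ _ _ _ _ _ iC pD) => //.
  - by split=> // x m; rewrite /iC /g1 /= add0r.
  - by move=> x a b [].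
  - by move=> x m2; exists (0, m2).
  - move=> x [m1 m2]; rewrite /pD /iC /=; split => [->|[c [_ ->]]] //.
    by exists m1.
have E2 : h P g2 = h M1 (zr M1) + h M2 (fun x m => v (fobj phi x) (f x m)).
  apply: (Hadd _ _ _ _ _ _ iC pD) => //.
  - by split=> // x m; rewrite /iC /g2 /= (lin0 (fl x)) (lin0 (vl _)).
  - by move=> x a b [].
  - by move=> x m2; exists (0, m2).
  - move=> x [m1 m2]; rewrite /pD /iC /=; split => [->|[c [_ ->]]] //.
    by exists m1.
have E3 : h P g1 = h P g2.
  apply: (Hiso _ _ _ _ tau) => //.
  - split=> // x m; rewrite /tau /g1 /g2 /=.
    by rewrite add0r.
  - move=> x; exists (fun p : mobj P x => ((p.1, p.2 - v x p.1) : mobj P x)).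
      by move=> [a b]; rewrite /tau /= addrK.
    by move=> [a b]; rewrite /tau /= subrK.
by rewrite -E1 E3 E2 addrC.
Qed.

End Inv.

Theorem lemma1p8 (R : comNzRingType) (G : EICategory) (phi : endofunctor G)
    (C D : chaincx R G) (N : nat)
    (nbC : int -> nat) (xsC : forall n, 'I_(nbC n) -> Ob G)
    (bC : forall n (i : 'I_(nbC n)), mobj (cmod C n) (xsC n i))
    (nbD : int -> nat) (xsD : forall n, 'I_(nbD n) -> Ob G)
    (bD : forall n (i : 'I_(nbD n)), mobj (cmod D n) (xsD n i))
    (HC : is_chaincx C) (HD : is_chaincx D)
    (HCf : cx_finite_free C N xsC bC) (HDf : cx_finite_free D N xsD bD)
    (v : chainfam C D) (f : chainfam D (cx_precomp phi C))
    (Hv : is_chainmap v) (Hf : is_chainmap f) :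
  forall (A : zmodType) (h : forall M : RGmod R G, ntfam M (precomp M phi) -> A),
    additive_invariant phi h ->
    u_eval phi h (C := C) (fun n x m => f n x (v n x m)) N + s_chi_eval phi h N xsD
    = u_eval phi h (C := D) (fun n x m => v n (fobj phi x) (f n x m)) N
      + s_chi_eval phi h N xsC.
Proof.
move=> A h Hh.
rewrite /u_eval /s_chi_eval -!big_split /=; apply: eq_bigr => j _.
set k := (j%:Z - N%:Z).
rewrite -!mulrzDl; congr (_ *~ _).
have HbC := HCf.1 k; have HbD := HDf.1 k.
rewrite -(h_basis _ _ _ _ _ Hh _ _ _ _ HbC) -(h_basis _ _ _ _ _ Hh _ _ _ _ HbD).
apply: (swap _ _ _ _ _ Hh).
- exact: Hv.1 k.
- exact: Hf.1 k.
- by exists (nbC k), (xsC k), (bC k).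
- by exists (nbD k), (xsD k), (bD k).
Qed.
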